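(* Let $G_1,G_2$ be nondeterministic automata ($G_i=\langle\Sigma_{i,\tau},Q_i,\rightarrow_i,Q_i^0\rangle$) with secret states $Q_i^S\subseteq Q_i$, and equip $G_1\|G_2$ with secret states $\{(x_1,x_2)\mid x_1\in Q_1^S\text{ or }x_2\in Q_2^S\}$; assume $UR(Q_i^0)\not\subseteq Q_i^S$ for $i=1,2$. For $i=1,2$, let $\sim_o$ be an opaque observation equivalence on $G_i$ with quotient $\tilde G_i$ (secret states $\{[x]\mid x\in Q_i^S\}$), let $H_{i,ob}$ be the quotient of $det(\tilde G_i)$ modulo an opaque bisimulation, $H_{i,b}$ the quotient of $det(\tilde G_i)$ modulo a bisimulation, and $H_{i,obd}$ the desired observer of $H_{i,ob}$ (delete classes $[X]$ with $X$ consisting only of secret states, keep reachable part). Let $T'_i=TPO(H_{i,obd},H_{i,b})$, let $G_i^T$ be the transformed automaton of $T'_i$, let $T=TPO(det_d(G_1\|G_2),det(G_1\|G_2))$ be the largest monolithic three-player observer w.r.t. $G_1\|G_2$, and let $\rho$ be the renaming map. Then for every string $s$ defined from the initial state of $G_1^T\|G_2^T$, the string $\rho(s)$ labels a path from the initial state of $T$.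
   Context: Automata: a (nondeterministic) automaton $G=\langle\Sigma_\tau,Q,\rightarrow,Q^0\rangle$ has finite observable alphabet $\Sigma$, special unobservable symbol $\tau$, $\Sigma_\tau=\Sigma\cup\{\tau\}$, $\rightarrow\subseteq Q\times\Sigma_\tau\times Q$, initial states $Q^0$. Deterministic: one initial state, no $\tau$-transitions, functional. $p\overset{s}{\Rightarrow}q$ ($s\in\Sigma^*$): a path from $p$ to $q$ whose labels with $\tau$'s deleted spell $s$. $UR(B)=\{q\mid b\overset{\varepsilon}{\Rightarrow}q,\ b\in B\}$. Observer $det(G)$: deterministic over $\Sigma$, initial state $UR(Q^0)$, $X\xrightarrow{\sigma}Y$ iff $Y=UR(\{y\mid x\xrightarrow{\sigma}y,\ x\in X\})\ne\emptyset$, reachable part. Desired observer $det_d(G)$: $det(G)$ with every state $X\subseteq Q^S$ deleted, reachable part kept. Quotient modulo equivalence $\sim$: classes as states, $[x]\xrightarrow{\sigma}[y]$ iff $x'\xrightarrow{\sigma}y'$ for some $x'\in[x],y'\in[y]$, classes of initial states initial. Bisimulation: equivalence $\approx$ with $x_1\approx x_2$, $x_1\xrightarrow{\sigma}y_1$ implying $x_2\xrightarrow{\sigma}y_2$ for some $y_2\approx y_1$. Opaque observation equivalence on $G$: equivalence $\sim_o$ on $Q$ such that $x_1\sim_o x_2$ implies (i) whenever $x_1\overset{s}{\Rightarrow}y_1$ there is $y_2\sim_o y_1$ with $x_2\overset{s}{\Rightarrow}y_2$, and (ii) $x_1\in Q^S\iff x_2\in Q^S$. Opaque bisimulation on $det(G)$: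 equivalence $\approx_o$ on its states with $X_1\approx_o X_2$ implying (i) whenever $X_1\xrightarrow{s}Y_1$ there is $Y_2\approx_o Y_1$ with $X_2\xrightarrow{s}Y_2$, and (ii) $X_1\subseteq Q^S\iff X_2\subseteq Q^S$. Synchronous composition of $A_1$ (alphabet $\Sigma_1$) and $A_2$ (alphabet $\Sigma_2$): states $Q_1\times Q_2$, initial $Q_1^0\times Q_2^0$, marked $Q_1^m\times Q_2^m$; shared events ($\Sigma_1\cap\Sigma_2$) move both components, events in $(\Sigma_1\setminus\Sigma_2)\cup\{\tau\}$ move only the first, events in $(\Sigma_2\setminus\Sigma_1)\cup\{\tau\}$ move only the second. Largest three-player observer $TPO(D,F)$ for deterministic $D=\langle\Sigma,X_D,\rightarrow_D,d_0\rangle$, $F=\langle\Sigma,X_F,\rightarrow_F,f_0\rangle$: with fresh symbol $\epsilon$ and fresh erasure symbols $\Sigma^r=\{\sigma\to\epsilon\mid\sigma\in\Sigma\}$, states are $Y$-states $(d,f)$, $Z$-states $Z((d,f),e)$ ($e\in\Sigma$, its observable component), $W$-states $W((d,f),a)$ ($a\in\Sigma\cup\Sigma^r$, its action component); initial state $(d_0,f_0)$; only reachable states; transitions exactly: (1) $(d,f)\xrightarrow{e}Z((d,f),e)$ if $e$ defined at $f$ in $F$; (2) $Z((d,f),e)\xrightarrow{\theta}Z((d',f),e)$ for $\theta\in\Sigma$ if $d\xrightarrow{\theta}_Dd'$; (3) $Z((d,f),e)\xrightarrow{\epsilon}W((d,f),e)$ if $e$ defined at $d$ in $D$ and at $f$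 in $F$; (4) $Z((d,f),e)\xrightarrow{e\to\epsilon}W((d,f),e\to\epsilon)$ if $e$ defined at $f$ in $F$; (5) $W((d,f),e)\xrightarrow{e}(d',f')$ with $d\xrightarrow{e}_Dd'$, $f\xrightarrow{e}_Ff'$; (6) $W((d,f),e\to\epsilon)\xrightarrow{e}(d,f')$ with $f\xrightarrow{e}_Ff'$. Transformed automaton: for a TPO $T_i$ over alphabet $\Sigma_i$ and the other index $j$, introduce fresh formal symbols $\theta_e$ and $\sigma_{a,w}$ (all distinct from each other and from events). Let $E_i$ be the set of observable components of $Z$-states of $T_i$ and $A_i$ the set of action components of its $W$-states. $G_i^T$ is the deterministic automaton with the states of $T_i$, initial state the initial $Y$-state, marked states all $Y$-states, and transitions: (a) $y\xrightarrow{e}z$ for each transition $y\xrightarrow{e}z$ of $T_i$ out of a $Y$-state; (b) $z\xrightarrow{\theta_e}q$ for each transition $z\xrightarrow{\theta}q$ of $T_i$ out of a $Z$-state $z$ with observable component $e$; (c) $w\xrightarrow{e_{a,w}}y$ for each transition $w\xrightarrow{e}y$ of $T_i$ out of a $W$-state with action component $a$; (d) a self-loop $y\xrightarrow{\alpha}y$ at every $Y$-state for every $\alpha\in\Sigma_j\setminus\Sigma_i$. Its alphabet is $\Sigma_{G_i^T}=\Sigma_i\cup(\Sigma_j\setminus\Sigma_i)\cup\{\theta_e\mid\theta\in\Sigma_i\cup\{\epsilon\}\cup\Sigma_i^r,\ e\in E_i\}\cup\{\sigma_{a,w}\mid\sigma\in\Sigma_i,\ a\in A_i\}\cup\{\beta_\alpha,\beta_{\alpha,w},\beta_{\alpha\to\epsilon,w}\mid\beta\in\Sigma_i\cap\Sigma_j,\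 \alpha\in\Sigma_j\setminus\Sigma_i\}$. Renaming: $\rho(e)=e$ for events, $\rho(\theta_e)=\theta$, $\rho(\sigma_{a,w})=\sigma$, extended letter-by-letter to strings. *)

(* Defs.v *)
From mathcomp Require Import ssreflect ssrfun ssrbool eqtype ssrnat seq choice fintype.

Set Implicit Arguments.
Unset Strict Implicit.
Unset Printing Implicit Defensive.

(* Labels are [option L]; [None] is the unobservable
   symbol tau.  [sts] is the state set (a predicate on the carrier type),
   [alph] the observable alphabet.  Deterministic automata are simply
   automata of this shape without tau-moves and with one initial state. *)
Record aut (L : Type) : Type := Aut {
  st   : Type;
  sts  : st -> Prop;
  tr   : st -> option L -> st -> Prop;
  init : st -> Prop;
  alph : L -> Prop }.
Arguments Aut {L}.
Arguments st {L} a.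
Arguments sts {L} a _.
Arguments tr {L} a _ _ _.
Arguments init {L} a _.
Arguments alph {L} a _.

Definition psubset (T : Type) (X Y : T -> Prop) : Prop := forall x, X x -> Y x.
Arguments psubset {T} X Y.

Inductive wpath (L : Type) (A : aut L) : st A -> list L -> st A -> Prop :=
| wp_nil x : sts A x -> @wpath L A x nil x
| wp_tau x y s z : tr A x None y -> @wpath L A y s z -> @wpath L A x s z
| wp_ev x e y s z : tr A x (Some e) y -> @wpath L A y s z -> @wpath L A x (e :: s) z.
Arguments wpath {L} A _ _ _.

Definition UR (L : Type) (A : aut L) (B : st A -> Prop) : st A -> Prop :=
  fun q => exists b, B b /\ wpath A b nil q.
Arguments UR {L} A B _.

Inductive reach (L : Type) (A : aut L) : st A -> Prop :=
| reach_init x : init A x -> sts A x -> @reach L A x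
| reach_step x a y : @reach L A x -> tr A x a y -> sts A y -> @reach L A y.
Arguments reach {L} A _.

Definition trim (L : Type) (A : aut L) : aut L :=
  Aut (st A) (reach A)
      (fun x a y => reach A x /\ tr A x a y /\ sts A y)
      (fun x => init A x /\ sts A x) (alph A).
Arguments trim {L} A.

Definition restrict (L : Type) (A : aut L) (P : st A -> Prop) : aut L :=
  Aut (st A) (fun x => sts A x /\ P x)
      (fun x a y => tr A x a y /\ sts A x /\ P x /\ sts A y /\ P y)
      (fun x => init A x /\ sts A x /\ P x) (alph A).
Arguments restrict {L} A P.

Definition post (L : Type) (A : aut L) (X : st A -> Prop) (e : L) : st A -> Prop :=
  fun y => exists x, X x /\ tr A x (Some e) y.
Arguments post {L} A X e _.

Definition det_raw (L : Type) (A : aut L) : aut L :=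
  Aut (st A -> Prop) (fun _ => True)
      (fun X a Y => match a with
                    | Some e => Y = UR A (post A X e) /\ exists y, Y y
                    | None => False
                    end)
      (fun X => X = UR A (init A)) (alph A).
Arguments det_raw {L} A.

Definition det (L : Type) (A : aut L) : aut L := trim (det_raw A).
Arguments det {L} A.

Definition det_d (L : Type) (A : aut L) (S : st A -> Prop) : aut L :=
  trim (restrict (det A) (fun X => ~ psubset X S)).
Arguments det_d {L} A S.

Definition equiv_on (L : Type) (A : aut L) (R : st A -> st A -> Prop) : Prop :=
  (forall x, sts A x -> R x x) /\
  (forall x y, sts A x -> sts A y -> R x y -> R y x) /\
  (forall x y z, sts A x -> sts A y -> sts A z -> R x y -> R y z -> R x z).
Arguments equiv_on {L} A R.

Definition cls (L : Type) (A : aut L) (R : st A -> st A -> Prop) (x : st A) : st A -> Prop :=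
  fun y => sts A y /\ R x y.
Arguments cls {L} A R x _.

Definition is_cls (L : Type) (A : aut L) (R : st A -> st A -> Prop) (C : st A -> Prop) : Prop :=
  exists x, sts A x /\ C = cls A R x.
Arguments is_cls {L} A R C.

Definition quot (L : Type) (A : aut L) (R : st A -> st A -> Prop) : aut L :=
  Aut (st A -> Prop) (is_cls A R)
      (fun C a D => is_cls A R C /\ is_cls A R D /\
                    exists x y, C x /\ D y /\ tr A x a y)
      (fun C => exists x, init A x /\ sts A x /\ C = cls A R x) (alph A).
Arguments quot {L} A R.

Definition quot_secret (L : Type) (A : aut L) (R : st A -> st A -> Prop)
  (S : st A -> Prop) : (st A -> Prop) -> Prop :=
  fun C => exists x, sts A x /\ S x /\ C = cls A R x.
Arguments quot_secret {L} A R S _.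

Definition bisim (L : Type) (A : aut L) (R : st A -> st A -> Prop) : Prop :=
  equiv_on A R /\
  forall x1 x2 e y1, sts A x1 -> sts A x2 -> R x1 x2 -> tr A x1 (Some e) y1 ->
    exists y2, tr A x2 (Some e) y2 /\ R y2 y1.
Arguments bisim {L} A R.

Definition opaque_obs_eq (L : Type) (A : aut L) (S : st A -> Prop)
  (R : st A -> st A -> Prop) : Prop :=
  equiv_on A R /\
  forall x1 x2, sts A x1 -> sts A x2 -> R x1 x2 ->
    (forall s y1, wpath A x1 s y1 -> exists y2, R y2 y1 /\ wpath A x2 s y2) /\
    (S x1 <-> S x2).
Arguments opaque_obs_eq {L} A S R.

Definition opaque_bisim (L : Type) (A : aut L) (S : st A -> Prop)
  (R : st (det A) -> st (det A) -> Prop) : Prop :=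
  equiv_on (det A) R /\
  forall X1 X2, sts (det A) X1 -> sts (det A) X2 -> R X1 X2 ->
    (forall s Y1, wpath (det A) X1 s Y1 -> exists Y2, R Y2 Y1 /\ wpath (det A) X2 s Y2) /\
    (psubset X1 S <-> psubset X2 S).
Arguments opaque_bisim {L} A S R.

Definition desired_quot (L : Type) (A : aut L) (S : st A -> Prop)
  (R : st (det A) -> st (det A) -> Prop) : aut L :=
  trim (restrict (quot (det A) R)
                 (fun C => ~ exists X, C X /\ psubset X S)).
Arguments desired_quot {L} A S R.

Definition sync (L : Type) (A1 A2 : aut L) : aut L :=
  Aut (st A1 * st A2)%type (fun p => sts A1 p.1 /\ sts A2 p.2)
      (fun p a q => match a with
         | None => (tr A1 p.1 None q.1 /\ q.2 = p.2) \/
                   (tr A2 p.2 None q.2 /\ q.1 = p.1)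
         | Some e =>
             (alph A1 e /\ alph A2 e /\ tr A1 p.1 a q.1 /\ tr A2 p.2 a q.2) \/
             (alph A1 e /\ ~ alph A2 e /\ tr A1 p.1 a q.1 /\ q.2 = p.2) \/
             (~ alph A1 e /\ alph A2 e /\ tr A2 p.2 a q.2 /\ q.1 = p.1)
         end)
      (fun p => init A1 p.1 /\ init A2 p.2)
      (fun e => alph A1 e \/ alph A2 e).
Arguments sync {L} A1 A2.

Definition sync_secret (L : Type) (A1 A2 : aut L) (S1 : st A1 -> Prop)
  (S2 : st A2 -> Prop) : st (sync A1 A2) -> Prop :=
  fun p => S1 p.1 \/ S2 p.2.
Arguments sync_secret {L} A1 A2 S1 S2 _.

(* labels: events [AEv e], the fresh symbol epsilon [AEps], erasures
   e -> epsilon [AEr e] *)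
Inductive act (L : Type) : Type := AEv (e : L) | AEps | AEr (e : L).
Arguments AEps {L}.
Arguments AEv {L} e.
Arguments AEr {L} e.

Inductive tpo_st (X Y L : Type) : Type :=
| TY (d : X) (f : Y)
| TZ (d : X) (f : Y) (e : L)
| TW (d : X) (f : Y) (a : act L).
Arguments TY {X Y L} d f.
Arguments TZ {X Y L} d f e.
Arguments TW {X Y L} d f a.

Definition defined_at (L : Type) (A : aut L) (x : st A) (e : L) : Prop :=
  exists y, tr A x (Some e) y.
Arguments defined_at {L} A x e.

Inductive tpo_tr (L : Type) (D F : aut L) :
  tpo_st (st D) (st F) L -> option (act L) -> tpo_st (st D) (st F) L -> Prop :=
| tpo1 d f e : defined_at F f e ->
    @tpo_tr L D F (TY d f) (Some (AEv e)) (TZ d f e)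
| tpo2 d d' f e th : tr D d (Some th) d' ->
    @tpo_tr L D F (TZ d f e) (Some (AEv th)) (TZ d' f e)
| tpo3 d f e : defined_at D d e -> defined_at F f e ->
    @tpo_tr L D F (TZ d f e) (Some AEps) (TW d f (AEv e))
| tpo4 d f e : defined_at F f e ->
    @tpo_tr L D F (TZ d f e) (Some (AEr e)) (TW d f (AEr e))
| tpo5 d d' f f' e : tr D d (Some e) d' -> tr F f (Some e) f' ->
    @tpo_tr L D F (TW d f (AEv e)) (Some (AEv e)) (TY d' f')
| tpo6 d f f' e : tr F f (Some e) f' ->
    @tpo_tr L D F (TW d f (AEr e)) (Some (AEv e)) (TY d f').

Arguments tpo_tr {L} D F _ _ _.

Definition act_alph (L : Type) (Sig : L -> Prop) (a : act L) : Prop :=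
  match a with AEv e => Sig e | AEps => True | AEr e => Sig e end.

Definition tpo (L : Type) (D F : aut L) : aut (act L) :=
  trim (Aut (tpo_st (st D) (st F) L) (fun _ => True) (@tpo_tr L D F)
            (fun q => exists d f, q = TY d f /\ init D d /\ init F f)
            (act_alph (alph D))).

(* [SEv e] : event e;  [STh th e] : theta_e;  [SSg s a] : sigma_{a,w}
   (beta_alpha = STh (AEv beta) alpha, beta_{alpha,w} = SSg beta (AEv alpha),
    beta_{alpha->eps,w} = SSg beta (AEr alpha)) *)
Inductive sym (L : Type) : Type :=
| SEv (e : L)
| STh (th : act L) (e : L)
| SSg (s : L) (a : act L).
Arguments SEv {L} e.
Arguments STh {L} th e.
Arguments SSg {L} s a.

Section Transformed.
Variables (X Y L : Type).
Variables (Tsts : tpo_st X Y L -> Prop)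
          (Ttr : tpo_st X Y L -> option (act L) -> tpo_st X Y L -> Prop)
          (Sigi Sigj : L -> Prop).

Inductive gt_tr : tpo_st X Y L -> option (sym L) -> tpo_st X Y L -> Prop :=
| gta d f e z : Ttr (TY d f) (Some (AEv e)) z -> gt_tr (TY d f) (Some (SEv e)) z
| gtb d f e th q : Ttr (TZ d f e) (Some th) q -> gt_tr (TZ d f e) (Some (STh th e)) q
| gtc d f a e y : Ttr (TW d f a) (Some (AEv e)) y -> gt_tr (TW d f a) (Some (SSg e a)) y
| gtd d f al : Tsts (TY d f) -> Sigj al -> ~ Sigi al ->
    gt_tr (TY d f) (Some (SEv al)) (TY d f).

Definition Zcomp (e : L) : Prop := exists d f, Tsts (TZ d f e).
Definition Wcomp (a : act L) : Prop := exists d f, Tsts (TW d f a).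

Definition gt_alph (x : sym L) : Prop :=
  match x with
  | SEv e => Sigi e \/ (Sigj e /\ ~ Sigi e)
  | STh th e => (act_alph Sigi th /\ Zcomp e) \/
      (exists b, th = AEv b /\ Sigi b /\ Sigj b /\ Sigj e /\ ~ Sigi e)
  | SSg s a => (Sigi s /\ Wcomp a) \/
      (Sigi s /\ Sigj s /\ exists al, Sigj al /\ ~ Sigi al /\ (a = AEv al \/ a = AEr al))
  end.
End Transformed.

Definition transformed (L : Type) (D F : aut L) (Sigi Sigj : L -> Prop) : aut (sym L) :=
  let T := tpo D F in
  Aut (tpo_st (st D) (st F) L) (sts T) (gt_tr (sts T) (tr T) Sigi Sigj)
      (init T) (gt_alph (sts T) Sigi Sigj).

Definition rho (L : Type) (x : sym L) : act L :=
  match x with SEv e => AEv e | STh th _ => th | SSg s _ => AEv s end.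

Definition nfa (E Q : Type) (trQ : Q -> option E -> Q -> Prop) (I : Q -> Prop)
  (Sig : E -> Prop) : aut E :=
  Aut Q (fun _ => True) trQ I Sig.

(* Main.v *)
From Stdlib Require Import Classical FunctionalExtensionality PropExtensionality.
Require Import Defs.
From mathcomp Require Import ssreflect ssrfun ssrbool eqtype ssrnat seq choice fintype.

Module Aux.
Set Implicit Arguments.
Unset Strict Implicit.

Section WP.
Variable L : Type.
Variable A : aut L.
Hypothesis Htr : forall x a y, tr A x a y -> sts A x.

Lemma wpath_sts x s y : wpath A x s y -> sts A y.
Proof. by elim. Qed.

Lemma wpath_sts0 x s y : wpath A x s y -> sts A x.
Proof. case=> // [x0 y0 s0 z H _|x0 e y0 s0 z H _]; exact: Htr H. Qed.

Lemma wpath_app x s y t z : wpath A x s y -> wpath A y t z -> wpath A x (s ++ t) z.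
Proof.
elim=> {x s y} [x _|x y s w H _ IH|x e y s w H _ IH] Hyz //=.
- exact: wp_tau H (IH Hyz).
- exact: wp_ev H (IH Hyz).
Qed.

Lemma wpath_cat x s y t z k : wpath A x s y -> wpath A y t z -> k = s ++ t -> wpath A x k z.
Proof. move=> H1 H2 ->; exact: wpath_app H1 H2. Qed.

Lemma wpath_split x k z : wpath A x k z -> forall s t, k = s ++ t ->
  exists y, wpath A x s y /\ wpath A y t z.
Proof.
elim=> {x k z} [x Hx|x y k z H _ IH|x e y k z H Hp IH] s t Hk.
- case: s Hk => [|? ?] //= Ht. subst t. exists x; split; exact: wp_nil.
- have [m [H1 H2]] := IH _ _ Hk. exists m; split => //. exact: wp_tau H H1.
- case: s Hk => [|e' s'] /= Hk.
  + subst t. exists x; split; first exact: wp_nil (Htr H).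
    exact: wp_ev H Hp.
  + case: Hk => <- Hk. have [m [H1 H2]] := IH _ _ Hk. exists m; split => //.
    exact: wp_ev H H1.
Qed.

Lemma wpath_one x k z : wpath A x k z -> forall e, k = [:: e] ->
  exists a b, wpath A x [::] a /\ tr A a (Some e) b /\ wpath A b [::] z.
Proof.
elim=> {x k z} [x Hx|x y k z H _ IH|x e y k z H Hp IH] e' Hk //.
- have [a [b [H1 [H2 H3]]]] := IH _ Hk. exists a, b; split => //. exact: wp_tau H H1.
- case: Hk => <- Hk; subst k. exists x, y; split => //. exact: wp_nil (Htr H).
Qed.

Definition Wn (w : list L) : st A -> Prop := fun q => exists b, init A b /\ wpath A b w q.

Lemma UR_post_Wn w e : UR A (post A (Wn w) e) = Wn (w ++ [:: e]).
Proof.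
apply: functional_extensionality => q; apply: propositional_extensionality; split.
- move=> [b [[x [[b0 [Hi Hp]] Ht]] Hq]]. exists b0; split => //.
  apply: wpath_app Hp _. exact: wp_ev Ht Hq.
- move=> [b0 [Hi Hp]]. have [m [H1 H2]] := wpath_split Hp (erefl _).
  have [a [b [Ha [Hab Hb]]]] := wpath_one H2 (erefl _).
  exists b; split => //. exists a; split => //. exists b0; split => //.
  rewrite -(cats0 w). exact: wpath_app H1 Ha.
Qed.
End WP.
Arguments Wn {L} A w _.

Lemma reach_sts L (A : aut L) x : reach A x -> sts A x.
Proof. by case. Qed.

(* det has no tau *)
Lemma det_one L (A : aut L) X e Y : wpath (det A) X [:: e] Y -> tr (det A) X (Some e) Y.
Proof.
move=> H. have [a [b [H1 [H2 H3]]]] := wpath_one (fun x a y (h : tr (det A) x a y) => h.1) H (erefl _).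
have E1 : forall x y, wpath (det A) x [::] y -> x = y.
  move=> x y Hw. remember [::] as k eqn:Hk. case: Hw Hk => //.
  by move=> x0 y0 s z [_ [] ].
by rewrite (E1 _ _ H1) -(E1 _ _ H3).
Qed.

Section Comp.
Variables (E Q : Type) (Sig : E -> Prop) (trq : Q -> option E -> Q -> Prop) (Iq S : Q -> Prop).
Hypothesis Hal : forall x e y, trq x (Some e) y -> Sig e.
Variable Ro : Q -> Q -> Prop.
Variables Rob Rb : ((Q -> Prop) -> Prop) -> ((Q -> Prop) -> Prop) -> Prop.
Let G := nfa trq Iq Sig.
Let Gt := quot G Ro.
Let St := quot_secret G Ro S.
Hypothesis Hoo : opaque_obs_eq G S Ro.
Hypothesis Hob : opaque_bisim Gt St Rob.
Hypothesis Hb : bisim (det Gt) Rb.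

Lemma Ro_refl x : Ro x x. Proof. by apply: Hoo.1.1. Qed.
Lemma Ro_sym x y : Ro x y -> Ro y x. Proof. by apply: Hoo.1.2.1. Qed.
Lemma Ro_trans x y z : Ro x y -> Ro y z -> Ro x z. Proof. by apply: Hoo.1.2.2. Qed.

Lemma Gt_htr x a y : tr Gt x a y -> sts Gt x. Proof. by case. Qed.
Lemma G_htr x a y : tr G x a y -> sts G x. Proof. by []. Qed.

Lemma quot_path C w C' : wpath Gt C w C' -> forall x, C x -> exists y, C' y /\ wpath G x w y.
Proof.
elim=> {C w C'} [C _|C C1 w C' H _ IH|C e C1 w C' H _ IH] x Hx.
- exists x; split => //. exact: wp_nil.
- case: H => [[z [_ Ez]] [[z1 [_ Ez1]] [x' [y' [Hx' [Hy' Ht]]]]]].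
  subst C C1. case: Hx => _ Hx. case: Hx' => _ Hx'. case: Hy' => _ Hy'.
  have Hxx : Ro x' x by apply: Ro_trans (Ro_sym Hx') Hx.
  have [y2 [Hy2 Hp]] := (Hoo.2 x' x I I Hxx).1 [::] y' (wp_tau Ht (wp_nil (A:=G) I)).
  have [y [Hy Hp2]] := IH y2 (conj I (Ro_trans Hy' (Ro_sym Hy2))).
  exists y; split => //. exact: (wpath_app (A:=G) Hp Hp2).
- case: H => [[z [_ Ez]] [[z1 [_ Ez1]] [x' [y' [Hx' [Hy' Ht]]]]]].
  subst C C1. case: Hx => _ Hx. case: Hx' => _ Hx'. case: Hy' => _ Hy'.
  have Hxx : Ro x' x by apply: Ro_trans (Ro_sym Hx') Hx.
  have [y2 [Hy2 Hp]] := (Hoo.2 x' x I I Hxx).1 [:: e] y' (wp_ev Ht (wp_nil (A:=G) I)).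
  have [y [Hy Hp2]] := IH y2 (conj I (Ro_trans Hy' (Ro_sym Hy2))).
  exists y; split => //. exact: (wpath_app (A:=G) Hp Hp2).
Qed.

Lemma cls_eq z y : Ro z y -> cls G Ro z = cls G Ro y.
Proof.
move=> H; apply: functional_extensionality => q; apply: propositional_extensionality.
rewrite /cls /=; split=> [[_ h]|[_ h]]; split => //.
- exact: Ro_trans (Ro_sym H) h.
- exact: Ro_trans H h.
Qed.

Lemma Wt_W w C : Wn Gt w C -> exists y, Wn G w y /\ C = cls G Ro y.
Proof.
move=> [C0 [[x [Hi [_ E0]]] Hp]].
have Hx0 : C0 x by rewrite E0; split => //; exact: Ro_refl.
have [y [Hy Hp2]] := quot_path Hp Hx0.
exists y; split; first by exists x.
have [z [_ Ez]] := wpath_sts Hp. subst C. case: Hy => _ Hy. exact: cls_eq.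
Qed.

Lemma nonsecret w : ~ psubset (Wn Gt w) St -> exists y, Wn G w y /\ ~ S y.
Proof.
move=> H. apply: NNPP => H2. apply: H => C HC. apply: NNPP => HnS.
have [y [Hy Ey]] := Wt_W HC. apply: H2. exists y; split => // Sy.
apply: HnS. exists y; split => //.
Qed.

Lemma quot_lbl C e D : tr Gt C (Some e) D -> Sig e.
Proof. move=> [_ [_ [x [y [_ [_ H]]]]]]. exact: Hal H. Qed.

Lemma det_lbl X e Y : tr (det Gt) X (Some e) Y -> Sig e.
Proof.
move=> [_ [[EY [c Hc]] _]]. subst Y.
move: Hc => [b [[x [_ H]] _]]. exact: quot_lbl H.
Qed.

Lemma det_step w e Y : tr (det Gt) (Wn Gt w) (Some e) Y ->
  Y = Wn Gt (w ++ [:: e]) /\ exists y, Wn G (w ++ [:: e]) y.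
Proof.
move=> Ht. have Hs := det_lbl Ht.
move: Ht => [_ [[EY [c Hc]] _]].
rewrite UR_post_Wn in EY; last exact: Gt_htr.
subst Y. split => //. have [y [Hy _]] := Wt_W Hc. by exists y.
Qed.

Let Hobd := desired_quot Gt St Rob.
Let Hbq := quot (det Gt) Rb.

Lemma Cd_step d th d' u : tr Hobd d (Some th) d' -> d (Wn Gt u) ->
  Sig th /\ d' (Wn Gt (u ++ [:: th])) /\ exists y, Wn G (u ++ [:: th]) y /\ ~ S y.
Proof.
move=> [_ [[[[Z [HZ EZ]] [[Z' [HZ' EZ']] [X [Y [HX [HY Ht]]]]]] [_ [_ [_ HP]]]] _]] Hu.
have [Hequiv Hop] := Hob.
subst d d'. case: HX => sX RX. case: Hu => sU RU.
have RXU : Rob X (Wn Gt u).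
  have RXZ := Hequiv.2.1 _ _ HZ sX RX. exact: (Hequiv.2.2 _ _ _ sX HZ sU RXZ RU).
have sY : sts (det Gt) Y by move: (Ht) => [h [h2 _]]; exact: reach_step h h2 I.
have [Y2 [RY2 Hp]] := (Hop X (Wn Gt u) sX sU RXU).1 [:: th] Y (wp_ev Ht (wp_nil sY)).
have sY2 := wpath_sts Hp.
have Ht2 := det_one Hp.
have Hs := det_lbl Ht2.
have [EY2 _] := det_step Ht2. subst Y2.
have Hd' : cls (det Gt) Rob Z' (Wn Gt (u ++ [:: th])).
  case: HY => sY' RY. split => //.
  have RY2' := Hequiv.2.1 _ _ sY2 sY RY2. exact: (Hequiv.2.2 _ _ _ HZ' sY sY2 RY RY2').
split => //; split => //. apply: nonsecret => Hps. apply: HP. by exists (Wn Gt (u ++ [:: th])).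
Qed.

Lemma Cf_step f e f' v : tr Hbq f (Some e) f' -> f (Wn Gt v) ->
  Sig e /\ f' (Wn Gt (v ++ [:: e])) /\ exists y, Wn G (v ++ [:: e]) y.
Proof.
move=> [[Z [HZ EZ]] [[Z' [HZ' EZ']] [X [Y [HX [HY Ht]]]]]] Hu.
have [Hequiv Hbs] := Hb.
subst f f'. case: HX => sX RX. case: Hu => sU RU.
have RXU : Rob X (Wn Gt v) \/ True by right.
have RXU' : Rb X (Wn Gt v).
  have RXZ := Hequiv.2.1 _ _ HZ sX RX. exact: (Hequiv.2.2 _ _ _ sX HZ sU RXZ RU).
have sY : sts (det Gt) Y by move: (Ht) => [h [h2 _]]; exact: reach_step h h2 I.
have [Y2 [Ht2 RY2]] := Hbs X (Wn Gt v) e Y sX sU RXU' Ht.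
have sY2 : sts (det Gt) Y2 by move: (Ht2) => [h [h2 _]]; exact: reach_step h h2 I.
have Hs := det_lbl Ht2.
have [EY2 Hw] := det_step Ht2. subst Y2.
split => //; split => //.
case: HY => sY' RY. split => //.
have RY2' := Hequiv.2.1 _ _ sY2 sY RY2. exact: (Hequiv.2.2 _ _ _ HZ' sY sY2 RY RY2').
Qed.


Variable Sig' : E -> Prop.
Let T := tpo Hobd Hbq.
Definition Cdf (d : st Hobd) (f : st Hbq) u v :=
  d (Wn Gt u) /\ f (Wn Gt v) /\ (exists y, Wn G u y /\ ~ S y) /\ (exists y, Wn G v y).

Lemma gt_sts q x q' : tr (transformed Hobd Hbq Sig Sig') q x q' -> sts T q -> sts T q'.
Proof.
case=> // [d f e z|d f e th q0|d f a e y] [h [h2 _]] _; exact: reach_step h h2 I.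
Qed.

Lemma step_Y d f u v x q' : Cdf d f u v -> tr (transformed Hobd Hbq Sig Sig') (TY d f) (Some x) q' ->
 (exists e, x = SEv e /\ q' = TZ d f e /\ Sig e /\ exists y, Wn G (v ++ [:: e]) y) \/
 (exists al, x = SEv al /\ q' = TY d f /\ Sig' al /\ ~ Sig al).
Proof.
move=> [Hd [Hf _]] H0.
have H : gt_tr (sts T) (tr T) Sig Sig' (TY d f) (Some x) q' := H0. clear H0.
inversion H; subst; clear H.
- left. match goal with h : tr T _ _ _ |- _ => case: h => [_ [Htp _]] end.
  inversion Htp; subst; clear Htp.
  match goal with h : defined_at Hbq _ _ |- _ => case: h => f' Htf end.
  have [Hs [_ Hw]] := Cf_step Htf Hf.
  exists e; do 3 split => //.
- right. exists al; do 3 split => //.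
Qed.

Lemma step_Z d f e u v x q' : Cdf d f u v -> tr (transformed Hobd Hbq Sig Sig') (TZ d f e) (Some x) q' ->
 (exists th d', x = STh (AEv th) e /\ q' = TZ d' f e /\ Sig th /\ Cdf d' f (u ++ [:: th]) v) \/
 (x = STh AEps e /\ q' = TW d f (AEv e) /\ (exists y, Wn G (u ++ [:: e]) y /\ ~ S y) /\
    (exists y, Wn G (v ++ [:: e]) y) /\ Sig e) \/
 (x = STh (AEr e) e /\ q' = TW d f (AEr e) /\ (exists y, Wn G (v ++ [:: e]) y) /\ Sig e).
Proof.
move=> [Hd [Hf [Hu Hv]]] H0.
have H : gt_tr (sts T) (tr T) Sig Sig' (TZ d f e) (Some x) q' := H0. clear H0.
inversion H; subst; clear H.
match goal with h : tr T _ _ _ |- _ => case: h => [_ [Htp _]] end.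
inversion Htp; subst; clear Htp.
- left. match goal with h : tr Hobd _ _ _ |- _ => rename h into Htd end.
  have [Hs [Hd' Hu']] := Cd_step Htd Hd. exists th0, d'. do 3 split => //.
- right; left.
  match goal with h : defined_at Hobd _ _ |- _ => case: h => d' Htd end.
  match goal with h : defined_at Hbq _ _ |- _ => case: h => f' Htf end.
  have [Hs [_ Hu']] := Cd_step Htd Hd. have [_ [_ Hv']] := Cf_step Htf Hf.
  do 4 split => //.
- right; right.
  match goal with h : defined_at Hbq _ _ |- _ => case: h => f' Htf end.
  have [Hs [_ Hv']] := Cf_step Htf Hf.
  do 3 split => //.
Qed.

Lemma step_W d f a u v x q' : Cdf d f u v -> tr (transformed Hobd Hbq Sig Sig') (TW d f a) (Some x) q' ->
 (exists e d' f', a = AEv e /\ x = SSg e a /\ q' = TY d' f' /\ Sig e /\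
     Cdf d' f' (u ++ [:: e]) (v ++ [:: e])) \/
 (exists e f', a = AEr e /\ x = SSg e a /\ q' = TY d f' /\ Sig e /\ Cdf d f' u (v ++ [:: e])).
Proof.
move=> [Hd [Hf [Hu Hv]]] H0.
have H : gt_tr (sts T) (tr T) Sig Sig' (TW d f a) (Some x) q' := H0. clear H0.
inversion H; subst; clear H.
match goal with h : tr T _ _ _ |- _ => case: h => [_ [Htp _]] end.
inversion Htp; subst; clear Htp.
- left. match goal with h : tr Hobd _ _ _ |- _ => rename h into Htd end.
  match goal with h : tr Hbq _ _ _ |- _ => rename h into Htf end.
  have [Hs [Hd' Hu']] := Cd_step Htd Hd. have [_ [Hf' Hv']] := Cf_step Htf Hf.
  exists e, d', f'. do 4 split => //.
- right. match goal with h : tr Hbq _ _ _ |- _ => rename h into Htf end.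
  have [Hs [Hf' Hv']] := Cf_step Htf Hf.
  exists e, f'. do 4 split => //.
Qed.

Lemma Cdf_init d f : init Hobd d -> init Hbq f -> ~ psubset (UR G (init G)) S -> Cdf d f [::] [::].
Proof.
move=> [[[X [[EX _] [sX Ed]]] _] _] [Y [[EY _] [sY Ef]]] Hi.
rewrite /= in EX EY. subst d f X Y.
have ns : exists y, Wn G [::] y /\ ~ S y.
  apply: NNPP => H. apply: Hi => y Hy. apply: NNPP => nS. apply: H. by exists y.
split; first by split => //; apply: Hob.1.1.
split; first by split => //; apply: Hb.1.1.
split => //. case: ns => y [Hy _]. by exists y.
Qed.
End Comp.

Inductive il (E : Type) (P1 P2 : E -> Prop) : list E -> list E -> list E -> Prop :=
| il_nil : il P1 P2 [::] [::] [::]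
| il_both u u1 u2 e : P1 e -> P2 e -> il P1 P2 u u1 u2 ->
    il P1 P2 (u ++ [:: e]) (u1 ++ [:: e]) (u2 ++ [:: e])
| il_1 u u1 u2 e : P1 e -> ~ P2 e -> il P1 P2 u u1 u2 ->
    il P1 P2 (u ++ [:: e]) (u1 ++ [:: e]) u2
| il_2 u u1 u2 e : ~ P1 e -> P2 e -> il P1 P2 u u1 u2 ->
    il P1 P2 (u ++ [:: e]) u1 (u2 ++ [:: e]).

Section Sync.
Variables (E : Type) (A1 A2 : aut E).
Hypothesis Hs1 : forall x, sts A1 x.
Hypothesis Hs2 : forall x, sts A2 x.
Let A := sync A1 A2.
Lemma HsA x : sts A x. Proof. split; [exact: Hs1|exact: Hs2]. Qed.
Lemma HtrA x a y : tr A x a y -> sts A x. Proof. move=> _; exact: HsA. Qed.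
Lemma Htr1 x a y : tr A1 x a y -> sts A1 x. Proof. move=> _; exact: Hs1. Qed.
Lemma Htr2 x a y : tr A2 x a y -> sts A2 x. Proof. move=> _; exact: Hs2. Qed.

Lemma sync_tau1 x k y z : wpath A1 x k y -> k = [::] -> wpath A (x, z) [::] (y, z).
Proof.
elim=> {x k y} [x _|x y k w H _ IH|x e y k w H _ IH] Hk //.
- exact: wp_nil (HsA _).
- apply: (wp_tau _ (IH Hk)). by left.
Qed.

Lemma sync_tau2 x k y z : wpath A2 x k y -> k = [::] -> wpath A (z, x) [::] (z, y).
Proof.
elim=> {x k y} [x _|x y k w H _ IH|x e y k w H _ IH] Hk //.
- exact: wp_nil (HsA _).
- apply: (wp_tau _ (IH Hk)). by right.
Qed.

Lemma il_W u u1 u2 : il (alph A1) (alph A2) u u1 u2 ->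
  forall y1 y2, Wn A1 u1 y1 -> Wn A2 u2 y2 -> Wn A u (y1, y2).
Proof.
elim=> {u u1 u2} [|u u1 u2 e P1 P2 _ IH|u u1 u2 e P1 P2 _ IH|u u1 u2 e P1 P2 _ IH] y1 y2.
- move=> [b1 [I1 H1]] [b2 [I2 H2]]. exists (b1, b2); split => //.
  exact: (wpath_cat (sync_tau1 b2 H1 (erefl _)) (sync_tau2 y1 H2 (erefl _)) (erefl _)).
- move=> [b1 [I1 H1]] [b2 [I2 H2]].
  have [m1 [M1 N1]] := wpath_split Htr1 H1 (erefl _).
  have [m2 [M2 N2]] := wpath_split Htr2 H2 (erefl _).
  have [a1 [c1 [Pa1 [T1 Pc1]]]] := wpath_one Htr1 N1 (erefl _).
  have [a2 [c2 [Pa2 [T2 Pc2]]]] := wpath_one Htr2 N2 (erefl _).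
  have [b [Ib Pb]] := IH m1 m2 (ex_intro _ b1 (conj I1 M1)) (ex_intro _ b2 (conj I2 M2)).
  exists b; split => //. apply: (wpath_app Pb).
  apply: (wpath_cat (sync_tau1 m2 Pa1 (erefl _)) _ (erefl _)).
  apply: (wpath_cat (sync_tau2 a1 Pa2 (erefl _)) _ (erefl _)).
  have Ht : tr A (a1, a2) (Some e) (c1, c2) by left.
  exact: (wp_ev Ht (wpath_cat (sync_tau1 c2 Pc1 (erefl _)) (sync_tau2 y1 Pc2 (erefl _)) (erefl _))).
- move=> [b1 [I1 H1]] [b2 [I2 H2]].
  have [m1 [M1 N1]] := wpath_split Htr1 H1 (erefl _).
  have [a1 [c1 [Pa1 [T1 Pc1]]]] := wpath_one Htr1 N1 (erefl _).
  have [b [Ib Pb]] := IH m1 y2 (ex_intro _ b1 (conj I1 M1)) (ex_intro _ b2 (conj I2 H2)).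
  exists b; split => //. apply: (wpath_app Pb).
  apply: (wpath_cat (sync_tau1 y2 Pa1 (erefl _)) _ (erefl _)).
  have Ht : tr A (a1, y2) (Some e) (c1, y2) by right; left.
  exact: (wp_ev Ht (sync_tau1 y2 Pc1 (erefl _))).
- move=> [b1 [I1 H1]] [b2 [I2 H2]].
  have [m2 [M2 N2]] := wpath_split Htr2 H2 (erefl _).
  have [a2 [c2 [Pa2 [T2 Pc2]]]] := wpath_one Htr2 N2 (erefl _).
  have [b [Ib Pb]] := IH y1 m2 (ex_intro _ b1 (conj I1 H1)) (ex_intro _ b2 (conj I2 M2)).
  exists b; split => //. apply: (wpath_app Pb).
  apply: (wpath_cat (sync_tau2 y1 Pa2 (erefl _)) _ (erefl _)).
  have Ht : tr A (y1, a2) (Some e) (y1, c2) by right; right.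
  exact: (wp_ev Ht (sync_tau2 y1 Pc2 (erefl _))).
Qed.
End Sync.

Section Mono.
Variables (E : Type) (A : aut E) (S : st A -> Prop).
Hypothesis HtrA : forall x a y, tr A x a y -> sts A x.
Let P := fun X : st A -> Prop => ~ psubset X S.
Let R := restrict (det A) P.

Lemma Fstep v e : reach (det_raw A) (Wn A v) -> (exists p, Wn A (v ++ [:: e]) p) ->
  tr (det A) (Wn A v) (Some e) (Wn A (v ++ [:: e])) /\ reach (det_raw A) (Wn A (v ++ [:: e])).
Proof.
move=> Hr [p Hp].
have Ht : tr (det_raw A) (Wn A v) (Some e) (Wn A (v ++ [:: e])).
  split; last by exists p. by rewrite UR_post_Wn.
split; first by split.
exact: reach_step Hr Ht I.
Qed.

Lemma Dstep u e : reach R (Wn A u) -> (exists p, Wn A (u ++ [:: e]) p /\ ~ S p) ->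
  tr (det_d A S) (Wn A u) (Some e) (Wn A (u ++ [:: e])) /\ reach R (Wn A (u ++ [:: e])).
Proof.
move=> Hr [p [Hp Hs]].
have [sD PD] := reach_sts Hr.
have [Ht Hr2] := Fstep sD (ex_intro _ p Hp).
have P2 : P (Wn A (u ++ [:: e])) by move=> H; apply: Hs; apply: H.
have Ht2 : tr R (Wn A u) (Some e) (Wn A (u ++ [:: e])).
  by do 4 split => //.
have sR : sts R (Wn A (u ++ [:: e])) by split.
split; first by split.
exact: reach_step Hr Ht2 sR.
Qed.

Lemma Dinit : (exists p, Wn A [::] p /\ ~ S p) ->
  init (det_d A S) (Wn A [::]) /\ reach R (Wn A [::]).
Proof.
move=> [p [Hp Hs]].
have P0 : P (Wn A [::]) by move=> H; apply: Hs; apply: H.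
have i0 : init (det A) (Wn A [::]) by split => //; exact: reach_init.
have s0 : sts (det A) (Wn A [::]) by exact: reach_init.
have iR : init R (Wn A [::]) by split; [exact: i0|split].
have sR : sts R (Wn A [::]) by split.
split; first by split.
exact: reach_init iR sR.
Qed.

Lemma Finit : init (det A) (Wn A [::]) /\ reach (det_raw A) (Wn A [::]).
Proof. have H : reach (det_raw A) (Wn A [::]) by exact: reach_init. by split; first split. Qed.
End Mono.

Definition dc X Y L (q : tpo_st X Y L) : X :=
  match q with TY d _ | TZ d _ _ | TW d _ _ => d end.
Definition fc X Y L (q : tpo_st X Y L) : Y :=
  match q with TY _ f | TZ _ f _ | TW _ f _ => f end.

Section Main.
Variables (E Q1 Q2 : Type) (Sig1 Sig2 : E -> Prop)
  (tr1 : Q1 -> option E -> Q1 -> Prop) (I1 S1 : Q1 -> Prop)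
  (tr2 : Q2 -> option E -> Q2 -> Prop) (I2 S2 : Q2 -> Prop).
Hypothesis (Hal1 : forall x e y, tr1 x (Some e) y -> Sig1 e)
  (Hal2 : forall x e y, tr2 x (Some e) y -> Sig2 e).
Variables (Ro1 : Q1 -> Q1 -> Prop) (Ro2 : Q2 -> Q2 -> Prop)
  (Rob1 Rb1 : ((Q1 -> Prop) -> Prop) -> ((Q1 -> Prop) -> Prop) -> Prop)
  (Rob2 Rb2 : ((Q2 -> Prop) -> Prop) -> ((Q2 -> Prop) -> Prop) -> Prop).
Let G1 := nfa tr1 I1 Sig1.
Let G2 := nfa tr2 I2 Sig2.
Hypothesis (Hi1 : ~ psubset (UR G1 (init G1)) S1) (Hi2 : ~ psubset (UR G2 (init G2)) S2)
  (Hoo1 : opaque_obs_eq G1 S1 Ro1) (Hoo2 : opaque_obs_eq G2 S2 Ro2).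
Let Gt1 := quot G1 Ro1.
Let Gt2 := quot G2 Ro2.
Let St1 := quot_secret G1 Ro1 S1.
Let St2 := quot_secret G2 Ro2 S2.
Hypothesis (Hob1 : opaque_bisim Gt1 St1 Rob1) (Hob2 : opaque_bisim Gt2 St2 Rob2)
  (Hb1 : bisim (det Gt1) Rb1) (Hb2 : bisim (det Gt2) Rb2).
Let H1obd := desired_quot Gt1 St1 Rob1.
Let H2obd := desired_quot Gt2 St2 Rob2.
Let H1b := quot (det Gt1) Rb1.
Let H2b := quot (det Gt2) Rb2.
Let GT1 := transformed H1obd H1b Sig1 Sig2.
Let GT2 := transformed H2obd H2b Sig2 Sig1.
Let G12 := sync G1 G2.
Let SS := sync_secret G1 G2 S1 S2.
Let D := det_d G12 SS.
Let F := det G12.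
Let T := tpo D F.
Let R := restrict (det G12) (fun X => ~ psubset X SS).
Let W := Wn G12.

Lemma H12 x a y : tr G12 x a y -> sts G12 x. Proof. by []. Qed.

Lemma Tmove t a t' : sts T t -> tpo_tr D F t (Some a) t' -> tr T t (Some a) t' /\ sts T t'.
Proof. move=> Hs Ht. have Htr : tr T t (Some a) t' by split. split => //. exact: reach_step Hs Ht I. Qed.

Lemma TM1 u v e : sts T (TY (W u) (W v)) -> reach (det_raw G12) (W v) ->
  (exists p, W (v ++ [:: e]) p) ->
  tr T (TY (W u) (W v)) (Some (AEv e)) (TZ (W u) (W v) e) /\ sts T (TZ (W u) (W v) e).
Proof.
move=> Hs Hr Hp. have [Ht _] := Fstep H12 Hr Hp.
apply: Tmove Hs _. apply: tpo1. by exists (W (v ++ [:: e])).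
Qed.

Lemma TM2 u v e th : sts T (TZ (W u) (W v) e) -> reach R (W u) ->
  (exists p, W (u ++ [:: th]) p /\ ~ SS p) ->
  tr T (TZ (W u) (W v) e) (Some (AEv th)) (TZ (W (u ++ [:: th])) (W v) e) /\
  sts T (TZ (W (u ++ [:: th])) (W v) e) /\ reach R (W (u ++ [:: th])).
Proof.
move=> Hs Hr Hp. have [Ht Hr'] := Dstep H12 Hr Hp.
have [H1 H2] := Tmove Hs (tpo2 _ _ Ht). by split; [|split].
Qed.

Lemma TM3 u v e : sts T (TZ (W u) (W v) e) -> reach R (W u) -> reach (det_raw G12) (W v) ->
  (exists p, W (u ++ [:: e]) p /\ ~ SS p) -> (exists p, W (v ++ [:: e]) p) ->
  tr T (TZ (W u) (W v) e) (Some AEps) (TW (W u) (W v) (AEv e)) /\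
  sts T (TW (W u) (W v) (AEv e)).
Proof.
move=> Hs Hr Hrv Hp Hq. have [Ht _] := Dstep H12 Hr Hp. have [Ht' _] := Fstep H12 Hrv Hq.
apply: Tmove Hs _. apply: tpo3; [by exists (W (u ++ [:: e])) | by exists (W (v ++ [:: e]))].
Qed.

Lemma TM4 u v e : sts T (TZ (W u) (W v) e) -> reach (det_raw G12) (W v) ->
  (exists p, W (v ++ [:: e]) p) ->
  tr T (TZ (W u) (W v) e) (Some (AEr e)) (TW (W u) (W v) (AEr e)) /\
  sts T (TW (W u) (W v) (AEr e)).
Proof.
move=> Hs Hrv Hq. have [Ht' _] := Fstep H12 Hrv Hq.
apply: Tmove Hs _. apply: tpo4. by exists (W (v ++ [:: e])).
Qed.

Lemma TM5 u v e : sts T (TW (W u) (W v) (AEv e)) -> reach R (W u) -> reach (det_raw G12) (W v) ->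
  (exists p, W (u ++ [:: e]) p /\ ~ SS p) -> (exists p, W (v ++ [:: e]) p) ->
  tr T (TW (W u) (W v) (AEv e)) (Some (AEv e)) (TY (W (u ++ [:: e])) (W (v ++ [:: e]))) /\
  sts T (TY (W (u ++ [:: e])) (W (v ++ [:: e]))) /\
  reach R (W (u ++ [:: e])) /\ reach (det_raw G12) (W (v ++ [:: e])).
Proof.
move=> Hs Hr Hrv Hp Hq. have [Ht Hr'] := Dstep H12 Hr Hp. have [Ht' Hrv'] := Fstep H12 Hrv Hq.
have [H1 H2] := Tmove Hs (tpo5 Ht Ht'). by split; [|split; [|split]].
Qed.

Lemma TM6 u v e : sts T (TW (W u) (W v) (AEr e)) -> reach (det_raw G12) (W v) ->
  (exists p, W (v ++ [:: e]) p) ->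
  tr T (TW (W u) (W v) (AEr e)) (Some (AEv e)) (TY (W u) (W (v ++ [:: e]))) /\
  sts T (TY (W u) (W (v ++ [:: e]))) /\ reach (det_raw G12) (W (v ++ [:: e])).
Proof.
move=> Hs Hrv Hq. have [Ht' Hrv'] := Fstep H12 Hrv Hq.
have [H1 H2] := Tmove Hs (tpo6 _ Ht'). by split; [|split].
Qed.


Let T1 := tpo H1obd H1b.
Let T2 := tpo H2obd H2b.
Definition Cdf1 := @Cdf E Q1 Sig1 tr1 I1 S1 Ro1 Rob1 Rb1.
Definition Cdf2 := @Cdf E Q2 Sig2 tr2 I2 S2 Ro2 Rob2 Rb2.
Definition St1' := tpo_st (st H1obd) (st H1b) E.
Definition St2' := tpo_st (st H2obd) (st H2b) E.

Definition tstate (q1 : St1') (q2 : St2') (du fv : st G12 -> Prop) : tpo_st (st D) (st F) E :=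
  match q1, q2 with
  | TY _ _, TY _ _ => TY du fv
  | TZ _ _ e, _ => TZ du fv e
  | TY _ _, TZ _ _ e => TZ du fv e
  | TW _ _ a, _ => TW du fv a
  | TY _ _, TW _ _ a => TW du fv a
  end.

Definition okp (q1 : St1') (q2 : St2') : Prop :=
  match q1, q2 with
  | TY _ _, TY _ _ => True
  | TZ _ _ e, TY _ _ => Sig1 e /\ ~ Sig2 e
  | TY _ _, TZ _ _ e => ~ Sig1 e /\ Sig2 e
  | TZ _ _ e, TZ _ _ e' => e' = e /\ Sig1 e /\ Sig2 e
  | TW _ _ a, TY _ _ => exists e, (a = AEv e \/ a = AEr e) /\ Sig1 e /\ ~ Sig2 e
  | TY _ _, TW _ _ a => exists e, (a = AEv e \/ a = AEr e) /\ ~ Sig1 e /\ Sig2 e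
  | TW _ _ a, TW _ _ a' => a' = a /\ exists e, (a = AEv e \/ a = AEr e) /\ Sig1 e /\ Sig2 e
  | _, _ => False
  end.

Definition Inv (q1 : St1') (q2 : St2') t :=
  sts GT1 q1 /\ sts GT2 q2 /\ sts T t /\
  exists u v u1 u2 v1 v2, il Sig1 Sig2 u u1 u2 /\ il Sig1 Sig2 v v1 v2 /\
    reach R (W u) /\ reach (det_raw G12) (W v) /\
    Cdf1 (dc q1) (fc q1) u1 v1 /\ Cdf2 (dc q2) (fc q2) u2 v2 /\ okp q1 q2 /\
    t = tstate q1 q2 (W u) (W v).

Lemma mkInv q1 q2 u v u1 u2 v1 v2 : sts GT1 q1 -> sts GT2 q2 ->
  sts T (tstate q1 q2 (W u) (W v)) ->
  il Sig1 Sig2 u u1 u2 -> il Sig1 Sig2 v v1 v2 ->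
  reach R (W u) -> reach (det_raw G12) (W v) ->
  Cdf1 (dc q1) (fc q1) u1 v1 -> Cdf2 (dc q2) (fc q2) u2 v2 -> okp q1 q2 ->
  Inv q1 q2 (tstate q1 q2 (W u) (W v)).
Proof.
move=> *. split => //; split => //; split => //.
exists u, v, u1, u2, v1, v2. by do 7 (split => //).
Qed.

Lemma pw u u1 u2 y1 y2 : il Sig1 Sig2 u u1 u2 -> Wn G1 u1 y1 -> Wn G2 u2 y2 -> W u (y1, y2).
Proof. move=> H. exact: (il_W (A1:=G1) (A2:=G2) (fun _ => I) (fun _ => I) H). Qed.

Lemma pwn u u1 u2 : il Sig1 Sig2 u u1 u2 -> (exists y1, Wn G1 u1 y1 /\ ~ S1 y1) ->
  (exists y2, Wn G2 u2 y2 /\ ~ S2 y2) -> exists p, W u p /\ ~ SS p.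
Proof.
move=> H [y1 [W1 n1]] [y2 [W2 n2]]. exists (y1, y2); split; first exact: pw H W1 W2.
by case.
Qed.

Lemma pwe u u1 u2 : il Sig1 Sig2 u u1 u2 -> (exists y1, Wn G1 u1 y1) ->
  (exists y2, Wn G2 u2 y2) -> exists p, W u p.
Proof. move=> H [y1 W1] [y2 W2]. exists (y1, y2); exact: pw H W1 W2. Qed.

Lemma gt_sts1 q x q' : tr GT1 q x q' -> sts GT1 q -> sts GT1 q'.
Proof. exact: gt_sts. Qed.
Lemma gt_sts2 q x q' : tr GT2 q x q' -> sts GT2 q -> sts GT2 q'.
Proof. exact: gt_sts. Qed.


Lemma alph1_SEv e : Sig1 e \/ Sig2 e -> alph GT1 (SEv e).
Proof. move=> /= [H|H]; first by left. case: (classic (Sig1 e)) => h; [by left|by right]. Qed.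
Lemma alph2_SEv e : Sig1 e \/ Sig2 e -> alph GT2 (SEv e).
Proof. move=> /= [H|H]; last by left. case: (classic (Sig2 e)) => h; [by left|by right]. Qed.

Lemma phYY d1 f1 d2 f2 u v u1 u2 v1 v2 x q1' q2' :
  sts GT1 (TY d1 f1) -> sts GT2 (TY d2 f2) -> sts T (TY (W u) (W v)) ->
  il Sig1 Sig2 u u1 u2 -> il Sig1 Sig2 v v1 v2 -> reach R (W u) -> reach (det_raw G12) (W v) ->
  Cdf1 d1 f1 u1 v1 -> Cdf2 d2 f2 u2 v2 ->
  tr (sync GT1 GT2) (TY d1 f1, TY d2 f2) (Some x) (q1', q2') ->
  exists t', tr T (TY (W u) (W v)) (Some (rho x)) t' /\ Inv q1' q2' t'.
Proof.
move=> s1 s2 sT Ilu Ilv Ru Rv C1 C2.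
case=> [[A1 [A2 [T1' T2']]]|[[A1 [nA2 [T1' E2]]]|[nA1 [A2 [T2' E1]]]]].
- have s1' := gt_sts1 T1' s1. have s2' := gt_sts2 T2' s2.
  have HH := step_Y Hal1 Hoo1 Hb1 C1 T1'.
  case: HH => [[e [Ex [E1 [Se1 Wv1]]]] | [e [Ex [E1 [S2a nS1a]]]]];
  subst x;
  have [[e' [[<-] [E2 [Se2 Wv2]]]] | [e' [[<-] [E2 [S1a nS2a]]]]] := step_Y Hal2 Hoo2 Hb2 C2 T2';
  simpl in E1, E2; subst q1' q2'.
  + have [Ht sT'] := TM1 sT Rv (pwe (il_both Se1 Se2 Ilv) Wv1 Wv2).
    exists (TZ (W u) (W v) e). split; first exact: Ht.
   
    exact: (mkInv (q1 := TZ d1 f1 e) (q2 := TZ d2 f2 e) s1' s2' sT' Ilu Ilv Ru Rv C1 C2).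
  + have [Ht sT'] := TM1 sT Rv (pwe (il_1 Se1 nS2a Ilv) Wv1 C2.2.2.2).
    exists (TZ (W u) (W v) e); split; first exact: Ht.
    exact: (mkInv (q1 := TZ d1 f1 e) (q2 := TY d2 f2) s1' s2' sT' Ilu Ilv Ru Rv C1 C2).
  + have [Ht sT'] := TM1 sT Rv (pwe (il_2 nS1a Se2 Ilv) C1.2.2.2 Wv2).
    exists (TZ (W u) (W v) e); split; first exact: Ht.
    exact: (mkInv (q1 := TY d1 f1) (q2 := TZ d2 f2 e) s1' s2' sT' Ilu Ilv Ru Rv C1 C2).
  + by case: nS1a.
- exfalso. apply: nA2.
  have [[e [Ex [_ [h _]]]] | [e [Ex [_ [h _]]]]] := step_Y Hal1 Hoo1 Hb1 C1 T1';
  subst x; apply: alph2_SEv; [by left|by right].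
- exfalso. apply: nA1.
  have [[e [Ex [_ [h _]]]] | [e [Ex [_ [h _]]]]] := step_Y Hal2 Hoo2 Hb2 C2 T2';
  subst x; apply: alph1_SEv; [by right|by left].
Qed.

Lemma a2_th_ev th e : Sig1 th -> Sig1 e -> ~ Sig2 e -> Sig2 th -> alph GT2 (STh (AEv th) e).
Proof. move=> *. rewrite /GT1 /GT2 /transformed /=. right. exists th. by repeat split. Qed.
Lemma a1_th_ev th e : Sig2 th -> Sig2 e -> ~ Sig1 e -> Sig1 th -> alph GT1 (STh (AEv th) e).
Proof. move=> *. rewrite /GT1 /GT2 /transformed /=. right. exists th. by repeat split. Qed.
Lemma a2_Z d f e th : sts GT2 (TZ d f e) -> act_alph Sig2 th -> alph GT2 (STh th e).
Proof. move=> h1 h2. rewrite /GT1 /GT2 /transformed /=. left. split => //. by exists d, f. Qed.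
Lemma a1_Z d f e th : sts GT1 (TZ d f e) -> act_alph Sig1 th -> alph GT1 (STh th e).
Proof. move=> h1 h2. rewrite /GT1 /GT2 /transformed /=. left. split => //. by exists d, f. Qed.
Lemma a2_W d f a e : sts GT2 (TW d f a) -> Sig2 e -> alph GT2 (SSg e a).
Proof. move=> h1 h2. rewrite /GT1 /GT2 /transformed /=. left. split => //. by exists d, f. Qed.
Lemma a1_W d f a e : sts GT1 (TW d f a) -> Sig1 e -> alph GT1 (SSg e a).
Proof. move=> h1 h2. rewrite /GT1 /GT2 /transformed /=. left. split => //. by exists d, f. Qed.

Lemma phZY d1 f1 e d2 f2 u v u1 u2 v1 v2 x q1' q2' :
  sts GT1 (TZ d1 f1 e) -> sts GT2 (TY d2 f2) -> sts T (TZ (W u) (W v) e) ->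
  il Sig1 Sig2 u u1 u2 -> il Sig1 Sig2 v v1 v2 -> reach R (W u) -> reach (det_raw G12) (W v) ->
  Cdf1 d1 f1 u1 v1 -> Cdf2 d2 f2 u2 v2 -> Sig1 e -> ~ Sig2 e ->
  tr (sync GT1 GT2) (TZ d1 f1 e, TY d2 f2) (Some x) (q1', q2') ->
  exists t', tr T (TZ (W u) (W v) e) (Some (rho x)) t' /\ Inv q1' q2' t'.
Proof.
move=> s1 s2 sT Ilu Ilv Ru Rv C1 C2 Se nSe.
case=> [[A1 [A2 [T1' T2']]]|[[A1 [nA2 [T1' E2]]]|[nA1 [A2 [T2' E1]]]]].
- exfalso.
  have [[th [d' [Ex _]]]|[[Ex _]|[Ex _]]] := step_Z Hal1 Hoo1 Hob1 Hb1 C1 T1'; subst x;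
  have [[e' [Ex _]]|[e' [Ex _]]] := step_Y Hal2 Hoo2 Hb2 C2 T2'; discriminate Ex.
- have s1' := gt_sts1 T1' s1. simpl in E2; subst q2'.
  have [[th [d' [Ex [E1 [Sth C1']]]]]|[[Ex [E1 [Nu [Nv _]]]]|[Ex [E1 [Nv _]]]]] :=
    step_Z Hal1 Hoo1 Hob1 Hb1 C1 T1'; subst x; simpl in E1; subst q1'.
  + have nS2th : ~ Sig2 th by move=> h; apply: nA2; exact: a2_th_ev Sth Se nSe h.
    have Ilu' := il_1 Sth nS2th Ilu.
    have [Ht [sT' Ru']] := TM2 sT Ru (pwn Ilu' C1'.2.2.1 C2.2.2.1).
    exists (TZ (W (u ++ [:: th])) (W v) e); split; first exact: Ht.
    exact: (mkInv (q1 := TZ d' f1 e) (q2 := TY d2 f2) s1' s2 sT' Ilu' Ilv Ru' Rv C1' C2 (conj Se nSe)).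
  + have [Ht sT'] := TM3 sT Ru Rv (pwn (il_1 Se nSe Ilu) Nu C2.2.2.1) (pwe (il_1 Se nSe Ilv) Nv C2.2.2.2).
    exists (TW (W u) (W v) (AEv e)); split; first exact: Ht.
    apply: (mkInv (q1 := TW d1 f1 (AEv e)) (q2 := TY d2 f2) s1' s2 sT' Ilu Ilv Ru Rv C1 C2).
    exists e; split; [by left|by []].
  + have [Ht sT'] := TM4 sT Rv (pwe (il_1 Se nSe Ilv) Nv C2.2.2.2).
    exists (TW (W u) (W v) (AEr e)); split; first exact: Ht.
    apply: (mkInv (q1 := TW d1 f1 (AEr e)) (q2 := TY d2 f2) s1' s2 sT' Ilu Ilv Ru Rv C1 C2).
    exists e; split; [by right|by []].
- exfalso. apply: nA1.
  have [[e' [Ex [_ [h _]]]] | [e' [Ex [_ [h _]]]]] := step_Y Hal2 Hoo2 Hb2 C2 T2';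
  subst x; apply: alph1_SEv; [by right|by left].
Qed.

Lemma phYZ d1 f1 e d2 f2 u v u1 u2 v1 v2 x q1' q2' :
  sts GT1 (TY d1 f1) -> sts GT2 (TZ d2 f2 e) -> sts T (TZ (W u) (W v) e) ->
  il Sig1 Sig2 u u1 u2 -> il Sig1 Sig2 v v1 v2 -> reach R (W u) -> reach (det_raw G12) (W v) ->
  Cdf1 d1 f1 u1 v1 -> Cdf2 d2 f2 u2 v2 -> ~ Sig1 e -> Sig2 e ->
  tr (sync GT1 GT2) (TY d1 f1, TZ d2 f2 e) (Some x) (q1', q2') ->
  exists t', tr T (TZ (W u) (W v) e) (Some (rho x)) t' /\ Inv q1' q2' t'.
Proof.
move=> s1 s2 sT Ilu Ilv Ru Rv C1 C2 nSe Se.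
case=> [[A1 [A2 [T1' T2']]]|[[A1 [nA2 [T1' E2]]]|[nA1 [A2 [T2' E1]]]]].
- exfalso.
  have [[th [d' [Ex _]]]|[[Ex _]|[Ex _]]] := step_Z Hal2 Hoo2 Hob2 Hb2 C2 T2'; subst x;
  have [[e' [Ex _]]|[e' [Ex _]]] := step_Y Hal1 Hoo1 Hb1 C1 T1'; discriminate Ex.
- exfalso. apply: nA2.
  have [[e' [Ex [_ [h _]]]] | [e' [Ex [_ [h _]]]]] := step_Y Hal1 Hoo1 Hb1 C1 T1';
  subst x; apply: alph2_SEv; [by left|by right].
- have s2' := gt_sts2 T2' s2. simpl in E1; subst q1'.
  have [[th [d' [Ex [E2 [Sth C2']]]]]|[[Ex [E2 [Nu [Nv _]]]]|[Ex [E2 [Nv _]]]]] :=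
    step_Z Hal2 Hoo2 Hob2 Hb2 C2 T2'; subst x; simpl in E2; subst q2'.
  + have nS1th : ~ Sig1 th by move=> h; apply: nA1; exact: a1_th_ev Sth Se nSe h.
    have Ilu' := il_2 nS1th Sth Ilu.
    have [Ht [sT' Ru']] := TM2 sT Ru (pwn Ilu' C1.2.2.1 C2'.2.2.1).
    exists (TZ (W (u ++ [:: th])) (W v) e); split; first exact: Ht.
    exact: (mkInv (q1 := TY d1 f1) (q2 := TZ d' f2 e) s1 s2' sT' Ilu' Ilv Ru' Rv C1 C2' (conj nSe Se)).
  + have [Ht sT'] := TM3 sT Ru Rv (pwn (il_2 nSe Se Ilu) C1.2.2.1 Nu) (pwe (il_2 nSe Se Ilv) C1.2.2.2 Nv).
    exists (TW (W u) (W v) (AEv e)); split; first exact: Ht.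
    apply: (mkInv (q1 := TY d1 f1) (q2 := TW d2 f2 (AEv e)) s1 s2' sT' Ilu Ilv Ru Rv C1 C2).
    exists e; split; [by left|by []].
  + have [Ht sT'] := TM4 sT Rv (pwe (il_2 nSe Se Ilv) C1.2.2.2 Nv).
    exists (TW (W u) (W v) (AEr e)); split; first exact: Ht.
    apply: (mkInv (q1 := TY d1 f1) (q2 := TW d2 f2 (AEr e)) s1 s2' sT' Ilu Ilv Ru Rv C1 C2).
    exists e; split; [by right|by []].
Qed.

Lemma phZZ d1 f1 e d2 f2 u v u1 u2 v1 v2 x q1' q2' :
  sts GT1 (TZ d1 f1 e) -> sts GT2 (TZ d2 f2 e) -> sts T (TZ (W u) (W v) e) ->
  il Sig1 Sig2 u u1 u2 -> il Sig1 Sig2 v v1 v2 -> reach R (W u) -> reach (det_raw G12) (W v) ->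
  Cdf1 d1 f1 u1 v1 -> Cdf2 d2 f2 u2 v2 -> Sig1 e -> Sig2 e ->
  tr (sync GT1 GT2) (TZ d1 f1 e, TZ d2 f2 e) (Some x) (q1', q2') ->
  exists t', tr T (TZ (W u) (W v) e) (Some (rho x)) t' /\ Inv q1' q2' t'.
Proof.
move=> s1 s2 sT Ilu Ilv Ru Rv C1 C2 Se1 Se2.
case=> [[A1 [A2 [T1' T2']]]|[[A1 [nA2 [T1' E2]]]|[nA1 [A2 [T2' E1]]]]].
- have s1' := gt_sts1 T1' s1. have s2' := gt_sts2 T2' s2.
  have [[th [d' [Ex [E1 [Sth C1']]]]]|[[Ex [E1 [Nu [Nv _]]]]|[Ex [E1 [Nv _]]]]] :=
    step_Z Hal1 Hoo1 Hob1 Hb1 C1 T1'; subst x; simpl in E1; subst q1';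
  have [[th' [d'' [Ex [E2 [Sth' C2']]]]]|[[Ex [E2 [Nu' [Nv' _]]]]|[Ex [E2 [Nv' _]]]]] :=
    step_Z Hal2 Hoo2 Hob2 Hb2 C2 T2'; simpl in E2; subst q2'; try discriminate Ex.
  + case: Ex => Eth; subst th'.
    have Ilu' := il_both Sth Sth' Ilu.
    have [Ht [sT' Ru']] := TM2 sT Ru (pwn Ilu' C1'.2.2.1 C2'.2.2.1).
    exists (TZ (W (u ++ [:: th])) (W v) e); split; first exact: Ht.
    exact: (mkInv (q1 := TZ d' f1 e) (q2 := TZ d'' f2 e) s1' s2' sT' Ilu' Ilv Ru' Rv C1' C2' (conj erefl (conj Se1 Se2))).
  + have [Ht sT'] := TM3 sT Ru Rv (pwn (il_both Se1 Se2 Ilu) Nu Nu') (pwe (il_both Se1 Se2 Ilv) Nv Nv').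
    exists (TW (W u) (W v) (AEv e)); split; first exact: Ht.
    apply: (mkInv (q1 := TW d1 f1 (AEv e)) (q2 := TW d2 f2 (AEv e)) s1' s2' sT' Ilu Ilv Ru Rv C1 C2).
    split => //. exists e; split; [by left|by []].
  + have [Ht sT'] := TM4 sT Rv (pwe (il_both Se1 Se2 Ilv) Nv Nv').
    exists (TW (W u) (W v) (AEr e)); split; first exact: Ht.
    apply: (mkInv (q1 := TW d1 f1 (AEr e)) (q2 := TW d2 f2 (AEr e)) s1' s2' sT' Ilu Ilv Ru Rv C1 C2).
    split => //. exists e; split; [by right|by []].
- have s1' := gt_sts1 T1' s1. simpl in E2; subst q2'.
  have [[th [d' [Ex [E1 [Sth C1']]]]]|[[Ex [E1 [Nu [Nv _]]]]|[Ex [E1 [Nv _]]]]] :=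
    step_Z Hal1 Hoo1 Hob1 Hb1 C1 T1'; subst x; simpl in E1; subst q1'.
  + have nS2th : ~ Sig2 th by move=> h; apply: nA2; exact: (a2_Z (th := AEv th) s2 h).
    have Ilu' := il_1 Sth nS2th Ilu.
    have [Ht [sT' Ru']] := TM2 sT Ru (pwn Ilu' C1'.2.2.1 C2.2.2.1).
    exists (TZ (W (u ++ [:: th])) (W v) e); split; first exact: Ht.
    exact: (mkInv (q1 := TZ d' f1 e) (q2 := TZ d2 f2 e) s1' s2 sT' Ilu' Ilv Ru' Rv C1' C2 (conj erefl (conj Se1 Se2))).
  + exfalso; apply: nA2. exact: (a2_Z (th := AEps) s2 I).
  + exfalso; apply: nA2. exact: (a2_Z (th := AEr e) s2 Se2).
- have s2' := gt_sts2 T2' s2. simpl in E1; subst q1'.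
  have [[th [d' [Ex [E2 [Sth C2']]]]]|[[Ex [E2 [Nu [Nv _]]]]|[Ex [E2 [Nv _]]]]] :=
    step_Z Hal2 Hoo2 Hob2 Hb2 C2 T2'; subst x; simpl in E2; subst q2'.
  + have nS1th : ~ Sig1 th by move=> h; apply: nA1; exact: (a1_Z (th := AEv th) s1 h).
    have Ilu' := il_2 nS1th Sth Ilu.
    have [Ht [sT' Ru']] := TM2 sT Ru (pwn Ilu' C1.2.2.1 C2'.2.2.1).
    exists (TZ (W (u ++ [:: th])) (W v) e); split; first exact: Ht.
    exact: (mkInv (q1 := TZ d1 f1 e) (q2 := TZ d' f2 e) s1 s2' sT' Ilu' Ilv Ru' Rv C1 C2' (conj erefl (conj Se1 Se2))).
  + exfalso; apply: nA1. exact: (a1_Z (th := AEps) s1 I).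
  + exfalso; apply: nA1. exact: (a1_Z (th := AEr e) s1 Se1).
Qed.

Lemma phWY d1 f1 a d2 f2 u v u1 u2 v1 v2 x q1' q2' :
  sts GT1 (TW d1 f1 a) -> sts GT2 (TY d2 f2) -> sts T (TW (W u) (W v) a) ->
  il Sig1 Sig2 u u1 u2 -> il Sig1 Sig2 v v1 v2 -> reach R (W u) -> reach (det_raw G12) (W v) ->
  Cdf1 d1 f1 u1 v1 -> Cdf2 d2 f2 u2 v2 ->
  (exists e, (a = AEv e \/ a = AEr e) /\ Sig1 e /\ ~ Sig2 e) ->
  tr (sync GT1 GT2) (TW d1 f1 a, TY d2 f2) (Some x) (q1', q2') ->
  exists t', tr T (TW (W u) (W v) a) (Some (rho x)) t' /\ Inv q1' q2' t'.
Proof.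
move=> s1 s2 sT Ilu Ilv Ru Rv C1 C2 [e [Ea [Se nSe]]].
case=> [[A1 [A2 [T1' T2']]]|[[A1 [nA2 [T1' E2]]]|[nA1 [A2 [T2' E1]]]]].
- exfalso.
  have [[e1 [d' [f' [_ [Ex _]]]]]|[e1 [f' [_ [Ex _]]]]] := step_W Hal1 Hoo1 Hob1 Hb1 C1 T1'; subst x;
  have [[e' [Ex _]]|[e' [Ex _]]] := step_Y Hal2 Hoo2 Hb2 C2 T2'; discriminate Ex.
- have s1' := gt_sts1 T1' s1. simpl in E2; subst q2'.
  have [[e1 [d' [f' [Ea1 [Ex [E1 [Se1' C1']]]]]]]|[e1 [f' [Ea1 [Ex [E1 [Se1' C1']]]]]]] :=
    step_W Hal1 Hoo1 Hob1 Hb1 C1 T1'; subst x; simpl in E1; subst q1' a.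
  + have Ee : e1 = e by case: Ea => [[->]|Ea]; [|discriminate Ea].
    subst e1. have Ilu' := il_1 Se nSe Ilu. have Ilv' := il_1 Se nSe Ilv.
    have [Ht [sT' [Ru' Rv']]] := TM5 sT Ru Rv (pwn Ilu' C1'.2.2.1 C2.2.2.1) (pwe Ilv' C1'.2.2.2 C2.2.2.2).
    exists (TY (W (u ++ [:: e])) (W (v ++ [:: e]))); split; first exact: Ht.
    exact: (mkInv (q1 := TY d' f') (q2 := TY d2 f2) s1' s2 sT' Ilu' Ilv' Ru' Rv' C1' C2 I).
  + have Ee : e1 = e by case: Ea => [Ea|[->]]; [discriminate Ea|].
    subst e1. have Ilv' := il_1 Se nSe Ilv.
    have [Ht [sT' Rv']] := TM6 sT Rv (pwe Ilv' C1'.2.2.2 C2.2.2.2).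
    exists (TY (W u) (W (v ++ [:: e]))); split; first exact: Ht.
    exact: (mkInv (q1 := TY d1 f') (q2 := TY d2 f2) s1' s2 sT' Ilu Ilv' Ru Rv' C1' C2 I).
- exfalso. apply: nA1.
  have [[e' [Ex [_ [h _]]]] | [e' [Ex [_ [h _]]]]] := step_Y Hal2 Hoo2 Hb2 C2 T2';
  subst x; apply: alph1_SEv; [by right|by left].
Qed.

Lemma phYW d1 f1 a d2 f2 u v u1 u2 v1 v2 x q1' q2' :
  sts GT1 (TY d1 f1) -> sts GT2 (TW d2 f2 a) -> sts T (TW (W u) (W v) a) ->
  il Sig1 Sig2 u u1 u2 -> il Sig1 Sig2 v v1 v2 -> reach R (W u) -> reach (det_raw G12) (W v) ->
  Cdf1 d1 f1 u1 v1 -> Cdf2 d2 f2 u2 v2 ->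
  (exists e, (a = AEv e \/ a = AEr e) /\ ~ Sig1 e /\ Sig2 e) ->
  tr (sync GT1 GT2) (TY d1 f1, TW d2 f2 a) (Some x) (q1', q2') ->
  exists t', tr T (TW (W u) (W v) a) (Some (rho x)) t' /\ Inv q1' q2' t'.
Proof.
move=> s1 s2 sT Ilu Ilv Ru Rv C1 C2 [e [Ea [nSe Se]]].
case=> [[A1 [A2 [T1' T2']]]|[[A1 [nA2 [T1' E2]]]|[nA1 [A2 [T2' E1]]]]].
- exfalso.
  have [[e1 [d' [f' [_ [Ex _]]]]]|[e1 [f' [_ [Ex _]]]]] := step_W Hal2 Hoo2 Hob2 Hb2 C2 T2'; subst x;
  have [[e' [Ex _]]|[e' [Ex _]]] := step_Y Hal1 Hoo1 Hb1 C1 T1'; discriminate Ex.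
- exfalso. apply: nA2.
  have [[e' [Ex [_ [h _]]]] | [e' [Ex [_ [h _]]]]] := step_Y Hal1 Hoo1 Hb1 C1 T1';
  subst x; apply: alph2_SEv; [by left|by right].
- have s2' := gt_sts2 T2' s2. simpl in E1; subst q1'.
  have [[e1 [d' [f' [Ea1 [Ex [E2 [Se1' C2']]]]]]]|[e1 [f' [Ea1 [Ex [E2 [Se1' C2']]]]]]] :=
    step_W Hal2 Hoo2 Hob2 Hb2 C2 T2'; subst x; simpl in E2; subst q2' a.
  + have Ee : e1 = e by case: Ea => [[->]|Ea]; [|discriminate Ea].
    subst e1. have Ilu' := il_2 nSe Se Ilu. have Ilv' := il_2 nSe Se Ilv.
    have [Ht [sT' [Ru' Rv']]] := TM5 sT Ru Rv (pwn Ilu' C1.2.2.1 C2'.2.2.1) (pwe Ilv' C1.2.2.2 C2'.2.2.2).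
    exists (TY (W (u ++ [:: e])) (W (v ++ [:: e]))); split; first exact: Ht.
    exact: (mkInv (q1 := TY d1 f1) (q2 := TY d' f') s1 s2' sT' Ilu' Ilv' Ru' Rv' C1 C2' I).
  + have Ee : e1 = e by case: Ea => [Ea|[->]]; [discriminate Ea|].
    subst e1. have Ilv' := il_2 nSe Se Ilv.
    have [Ht [sT' Rv']] := TM6 sT Rv (pwe Ilv' C1.2.2.2 C2'.2.2.2).
    exists (TY (W u) (W (v ++ [:: e]))); split; first exact: Ht.
    exact: (mkInv (q1 := TY d1 f1) (q2 := TY d2 f') s1 s2' sT' Ilu Ilv' Ru Rv' C1 C2' I).
Qed.

Lemma phWW d1 f1 a d2 f2 u v u1 u2 v1 v2 x q1' q2' :
  sts GT1 (TW d1 f1 a) -> sts GT2 (TW d2 f2 a) -> sts T (TW (W u) (W v) a) ->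
  il Sig1 Sig2 u u1 u2 -> il Sig1 Sig2 v v1 v2 -> reach R (W u) -> reach (det_raw G12) (W v) ->
  Cdf1 d1 f1 u1 v1 -> Cdf2 d2 f2 u2 v2 ->
  (exists e, (a = AEv e \/ a = AEr e) /\ Sig1 e /\ Sig2 e) ->
  tr (sync GT1 GT2) (TW d1 f1 a, TW d2 f2 a) (Some x) (q1', q2') ->
  exists t', tr T (TW (W u) (W v) a) (Some (rho x)) t' /\ Inv q1' q2' t'.
Proof.
move=> s1 s2 sT Ilu Ilv Ru Rv C1 C2 [e [Ea [Se1 Se2]]].
case=> [[A1 [A2 [T1' T2']]]|[[A1 [nA2 [T1' E2]]]|[nA1 [A2 [T2' E1]]]]].
- have s1' := gt_sts1 T1' s1. have s2' := gt_sts2 T2' s2.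
  have [[e1 [d' [f' [Ea1 [Ex [E1 [S1' C1']]]]]]]|[e1 [f' [Ea1 [Ex [E1 [S1' C1']]]]]]] :=
    step_W Hal1 Hoo1 Hob1 Hb1 C1 T1'; subst x; simpl in E1; subst q1';
  have [[e2 [d'' [f'' [Ea2 [Ex [E2 [S2' C2']]]]]]]|[e2 [f'' [Ea2 [Ex [E2 [S2' C2']]]]]]] :=
    step_W Hal2 Hoo2 Hob2 Hb2 C2 T2'; simpl in E2; subst q2'; rewrite Ea1 in Ea2;
    try discriminate Ea2; case: Ea2 => Ee; subst e2 a.
  + have Ilu' := il_both S1' S2' Ilu. have Ilv' := il_both S1' S2' Ilv.
    have [Ht [sT' [Ru' Rv']]] := TM5 sT Ru Rv (pwn Ilu' C1'.2.2.1 C2'.2.2.1) (pwe Ilv' C1'.2.2.2 C2'.2.2.2).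
    exists (TY (W (u ++ [:: e1])) (W (v ++ [:: e1]))); split; first exact: Ht.
    exact: (mkInv (q1 := TY d' f') (q2 := TY d'' f'') s1' s2' sT' Ilu' Ilv' Ru' Rv' C1' C2' I).
  + have Ilv' := il_both S1' S2' Ilv.
    have [Ht [sT' Rv']] := TM6 sT Rv (pwe Ilv' C1'.2.2.2 C2'.2.2.2).
    exists (TY (W u) (W (v ++ [:: e1]))); split; first exact: Ht.
    exact: (mkInv (q1 := TY d1 f') (q2 := TY d2 f'') s1' s2' sT' Ilu Ilv' Ru Rv' C1' C2' I).
- exfalso.
  have [[e1 [d' [f' [Ea1 [Ex [_ [S1' _]]]]]]]|[e1 [f' [Ea1 [Ex [_ [S1' _]]]]]]] :=
    step_W Hal1 Hoo1 Hob1 Hb1 C1 T1'; subst x; apply: nA2; apply: (a2_W s2);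
    rewrite Ea1 in Ea; case: Ea => Eq; first [discriminate Eq | by case: Eq => ->].
- exfalso.
  have [[e1 [d' [f' [Ea1 [Ex [_ [S1' _]]]]]]]|[e1 [f' [Ea1 [Ex [_ [S1' _]]]]]]] :=
    step_W Hal2 Hoo2 Hob2 Hb2 C2 T2'; subst x; apply: nA1; apply: (a1_W s1);
    rewrite Ea1 in Ea; case: Ea => Eq; first [discriminate Eq | by case: Eq => ->].
Qed.

Lemma main_step q1 q2 t x q1' q2' : Inv q1 q2 t ->
  tr (sync GT1 GT2) (q1, q2) (Some x) (q1', q2') ->
  exists t', tr T t (Some (rho x)) t' /\ Inv q1' q2' t'.
Proof.
move=> [s1 [s2 [sT [u [v [u1 [u2 [v1 [v2 [Ilu [Ilv [Ru [Rv [C1 [C2 [Ok Et]]]]]]]]]]]]]]]] Htr.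
subst t.
case: q1 s1 C1 Ok Htr sT => [d1 f1|d1 f1 e1|d1 f1 a1] s1 C1;
  case: q2 s2 C2 => [d2 f2|d2 f2 e2|d2 f2 a2] s2 C2 Ok Htr sT.
- exact: (phYY s1 s2 sT Ilu Ilv Ru Rv C1 C2 Htr).
- exact: (phYZ s1 s2 sT Ilu Ilv Ru Rv C1 C2 Ok.1 Ok.2 Htr).
- exact: (phYW s1 s2 sT Ilu Ilv Ru Rv C1 C2 Ok Htr).
- exact: (phZY s1 s2 sT Ilu Ilv Ru Rv C1 C2 Ok.1 Ok.2 Htr).
- case: Ok => Ee [S1' S2']. subst e2.
  exact: (phZZ s1 s2 sT Ilu Ilv Ru Rv C1 C2 S1' S2' Htr).
- by case: Ok.
- exact: (phWY s1 s2 sT Ilu Ilv Ru Rv C1 C2 Ok Htr).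
- by case: Ok.
- case: Ok => Ee Ok. subst a2.
  exact: (phWW s1 s2 sT Ilu Ilv Ru Rv C1 C2 Ok Htr).
Qed.


Lemma no_tau1 q q' : tr GT1 q None q' -> False.
Proof. move=> H. have H' : gt_tr (sts T1) (tr T1) Sig1 Sig2 q None q' := H. inversion H'. Qed.
Lemma no_tau2 q q' : tr GT2 q None q' -> False.
Proof. move=> H. have H' : gt_tr (sts T2) (tr T2) Sig2 Sig1 q None q' := H. inversion H'. Qed.

Lemma main_path p s p' : wpath (sync GT1 GT2) p s p' -> forall t0 r t,
  Inv p.1 p.2 t -> wpath T t0 r t -> exists t', wpath T t0 (r ++ map (@rho E) s) t'.
Proof.
elim=> {p s p'} [p _|p p1 s p' H _ IH|p a p1 s p' H _ IH] t0 r t HI Hw.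
- exists t; by rewrite cats0.
- exfalso. case: H => [[H _]|[H _]]; [exact: no_tau1 H|exact: no_tau2 H].
- case: p HI H => q1 q2 HI H. case: p1 IH H => q1' q2' IH H.
  have [t' [Ht HI']] := main_step HI H.
  have sT' : sts T t' := HI'.2.2.1.
  have Hw' : wpath T t0 (r ++ [:: rho a]) t' := wpath_app Hw (wp_ev Ht (wp_nil sT')).
  have [t'' Hw''] := IH t0 _ t' HI' Hw'. exists t''. by rewrite -catA in Hw''.
Qed.

Lemma init_inv q0 : init (sync GT1 GT2) q0 -> exists t0, init T t0 /\ Inv q0.1 q0.2 t0.
Proof.
case: q0 => q1 q2 [[[d1 [f1 [E1 [Id1 If1]]]] _] [[d2 [f2 [E2 [Id2 If2]]]] _]].
have C1 : Cdf1 d1 f1 [::] [::] := Cdf_init Hob1 Hb1 Id1 If1 Hi1.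
have C2 : Cdf2 d2 f2 [::] [::] := Cdf_init Hob2 Hb2 Id2 If2 Hi2.
have [ID RD] := Dinit (A := G12) (S := SS) (pwn (il_nil Sig1 Sig2) C1.2.2.1 C2.2.2.1).
have [IF RF] := Finit G12.
have iT : init T (TY (W [::]) (W [::])).
  split => //. by exists (W [::]), (W [::]).
have sT : sts T (TY (W [::]) (W [::])) by exact: (reach_init iT.1 I).
exists (TY (W [::]) (W [::])); split => //.
simpl in E1, E2. subst q1 q2.
have s1 : sts GT1 (TY d1 f1).
  apply: reach_init => //. by exists d1, f1.
have s2 : sts GT2 (TY d2 f2).
  apply: reach_init => //. by exists d2, f2.
exact: (mkInv (q1 := TY d1 f1) (q2 := TY d2 f2) s1 s2 sT (il_nil _ _) (il_nil _ _) RD RF C1 C2 I).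
Qed.

Lemma final (s : list (sym E)) q0 q :
  init (sync GT1 GT2) q0 -> wpath (sync GT1 GT2) q0 s q ->
  exists t0 t, init T t0 /\ wpath T t0 (map (@rho E) s) t.
Proof.
move=> Hi Hw. have [t0 [It HI]] := init_inv Hi.
have sT : sts T t0 := HI.2.2.1.
have [t Ht] := main_path Hw HI (wp_nil sT).
by exists t0, t.
Qed.
End Main.
End Aux.
Import Aux.

Theorem theorem5 (E Q1 Q2 : finType) (Sig1 Sig2 : E -> Prop)
  (tr1 : Q1 -> option E -> Q1 -> Prop) (I1 S1 : Q1 -> Prop)
  (tr2 : Q2 -> option E -> Q2 -> Prop) (I2 S2 : Q2 -> Prop)
  (Hal1 : forall x e y, tr1 x (Some e) y -> Sig1 e)
  (Hal2 : forall x e y, tr2 x (Some e) y -> Sig2 e)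
  (Ro1 : Q1 -> Q1 -> Prop) (Ro2 : Q2 -> Q2 -> Prop)
  (Rob1 Rb1 : ((Q1 -> Prop) -> Prop) -> ((Q1 -> Prop) -> Prop) -> Prop)
  (Rob2 Rb2 : ((Q2 -> Prop) -> Prop) -> ((Q2 -> Prop) -> Prop) -> Prop) :
  let G1 := nfa tr1 I1 Sig1 in
  let G2 := nfa tr2 I2 Sig2 in
  ~ psubset (UR G1 (init G1)) S1 ->
  ~ psubset (UR G2 (init G2)) S2 ->
  opaque_obs_eq G1 S1 Ro1 ->
  opaque_obs_eq G2 S2 Ro2 ->
  let Gt1 := quot G1 Ro1 in
  let Gt2 := quot G2 Ro2 in
  let St1 := quot_secret G1 Ro1 S1 in
  let St2 := quot_secret G2 Ro2 S2 in
  opaque_bisim Gt1 St1 Rob1 ->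
  opaque_bisim Gt2 St2 Rob2 ->
  bisim (det Gt1) Rb1 ->
  bisim (det Gt2) Rb2 ->
  let H1obd := desired_quot Gt1 St1 Rob1 in
  let H2obd := desired_quot Gt2 St2 Rob2 in
  let H1b := quot (det Gt1) Rb1 in
  let H2b := quot (det Gt2) Rb2 in
  let GT1 := transformed H1obd H1b Sig1 Sig2 in
  let GT2 := transformed H2obd H2b Sig2 Sig1 in
  let G12 := sync G1 G2 in
  let T := tpo (det_d G12 (sync_secret G1 G2 S1 S2)) (det G12) in
  forall (s : list (sym E)) q0 q,
    init (sync GT1 GT2) q0 -> wpath (sync GT1 GT2) q0 s q ->
    exists t0 t, init T t0 /\ wpath T t0 (map (@rho E) s) t.
Proof.
intros G1 G2 Hi1 Hi2 Hoo1 Hoo2 Gt1 Gt2 St1 St2 Hob1 Hob2 Hb1 Hb2 H1obd H2obd H1b H2b GT1 GT2 G12 T s q0 q Hin Hw.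
exact: (final Hal1 Hal2 Hi1 Hi2 Hoo1 Hoo2 Hob1 Hob2 Hb1 Hb2 Hin Hw).
Qed.
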